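(* Let $r\ge4$, $l\ge r$, $\alpha,\beta\in\mathbb N$ with $\alpha+\beta=l-(r-2)$, let $N_G=\mathbb Z^r+\mathbb Z\frac1l(1,\ldots,1,\alpha,\beta)^{\intercal}$ (with $r-2$ entries equal to $1$), $\mathfrak L=\{x\in\mathbb R^r:x_1=\cdots=x_{r-2}\}$, $\overline{N_G}=N_G\cap\mathfrak L$ and $\overline{\sigma_0}=\mathrm{pos}(e_1,\ldots,e_r)\cap\mathfrak L$. Then the first primitive lattice point $\mathfrak n_G$ of $\overline{N_G}\setminus\{\mathbf 0\}$ on the ray $\mathbb R_{\ge0}\frac1{r-2}\sum_{i=1}^{r-2}e_i$ is $$\mathfrak n_G=\frac{1}{\gcd(\alpha,\beta,l)}\sum_{i=1}^{r-2}e_i,$$ so that the set of primitive minimal generators of $\overline{\sigma_0}$ is $\{\mathfrak n_G,e_{r-1},e_r\}$, and $$\mu_G:=\min\Big\{\varkappa\in\mathbb Q_{>0}:\varkappa\cdot\frac1{r-2}\sum_{i=1}^{r-2}e_i\in\overline{N_G}\setminus\{\mathbf0\}\Big\}=\frac{r-2}{\gcd(\alpha,\beta,l)}.$$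
   Context: $e_1,\ldots,e_r$ are the standard unit vectors of $\mathbb R^r$. *)

(* Defs.v *)
(* R : realType, vectors in R^r are row vectors 'rV[R]_r.
   Indices are 0-based: e_{i+1} of the paper is [unitv r i]. *)
From mathcomp Require Import all_boot all_order all_algebra.
From mathcomp Require Import reals.
Set Implicit Arguments. Unset Strict Implicit. Unset Printing Implicit Defensive.
Import Order.TTheory GRing.Theory Num.Theory.
Local Open Scope ring_scope.

Section Defs.
Variable R : realType.

(* standard unit vector e_{k+1} of R^r (zero vector if k >= r) *)
Definition unitv (r k : nat) : 'rV[R]_r := \row_(j < r) ((j : nat) == k)%:R.

Definition sumE (r : nat) : 'rV[R]_r := \sum_(i < r - 2) unitv r i.

Definition vG (r l alpha beta : nat) : 'rV[R]_r :=
  (l%:R)^-1 *: \row_(j < r)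
     (if ((j : nat) < r - 2)%N then 1 else if (j : nat) == (r - 2)%N then alpha%:R
      else beta%:R).

Definition inNG (r l alpha beta : nat) (x : 'rV[R]_r) : Prop :=
  exists (z : 'I_r -> int) (k : int),
    x = \row_(j < r) (z j)%:~R + k%:~R *: vG r l alpha beta.

Definition inL (r : nat) (x : 'rV[R]_r) : Prop :=
  forall i j : 'I_r, ((i : nat) < r - 2)%N -> ((j : nat) < r - 2)%N -> x 0 i = x 0 j.

Definition inNGbar (r l alpha beta : nat) (x : 'rV[R]_r) : Prop :=
  inNG l alpha beta x /\ inL x.

Definition inSigma0bar (r : nat) (x : 'rV[R]_r) : Prop :=
  (forall i, 0 <= x 0 i) /\ inL x.

Definition first_lattice_point (r : nat) (S : 'rV[R]_r -> Prop)
    (u p : 'rV[R]_r) : Prop :=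
  exists t : R, 0 < t /\ p = t *: u /\ S p /\
    (forall s : R, 0 < s -> S (s *: u) -> t <= s).

Definition extremal_ray_gen (r : nat) (C : 'rV[R]_r -> Prop) (u : 'rV[R]_r)
  : Prop :=
  u != 0 /\ C u /\
  (forall a b, C a -> C b -> a + b = u ->
     exists s : R, 0 <= s /\ a = s *: u).

Definition prim_min_gen (r : nat) (C S : 'rV[R]_r -> Prop) (p : 'rV[R]_r)
  : Prop :=
  exists u, extremal_ray_gen C u /\ first_lattice_point S u p.

End Defs.

(* Main.v *)
Require Import Defs.
From mathcomp Require Import all_boot all_order all_algebra.
From mathcomp Require Import reals.
From mathcomp Require Import ring zify.
Set Implicit Arguments. Unset Strict Implicit. Unset Printing Implicit Defensive.
Import Order.TTheory GRing.Theory Num.Theory.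
Local Open Scope ring_scope.

Section Aux.
Variables (R : realType) (r l alpha beta : nat).
Hypotheses (hr : (4 <= r)%N) (hl : (r <= l)%N) (hab : (alpha + beta = l - (r - 2))%N).

Lemma sumE_E (j : 'I_r) : sumE R r 0 j = ((j : nat) < r - 2)%N%:R.
Proof.
rewrite /sumE summxE.
have -> : forall n, \sum_(i < n) unitv R r i 0 j = ((j : nat) < n)%N%:R.
  elim=> [|n IH]; first by rewrite big_ord0 ltn0.
  rewrite big_ord_recr /= IH /unitv mxE ltnS.
  by case: ltngtP => _; rewrite /= ?addr0 ?add0r.
by [].
Qed.

Lemma unitvE k (j : 'I_r) : unitv R r k 0 j = ((j : nat) == k)%:R.
Proof. by rewrite mxE. Qed.

Definition cG (j : 'I_r) : R :=
  if ((j : nat) < r - 2)%N then 1 else if (j : nat) == (r - 2)%N then alpha%:R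
  else beta%:R.

Lemma NG_coord x : inNG l alpha beta x -> exists (z : 'I_r -> int) (k : int),
  forall j : 'I_r, x 0 j = (z j)%:~R + k%:~R * ((l%:R)^-1 * cG j).
Proof.
move=> [z [k ->]]; exists z, k => j.
by rewrite /vG !mxE.
Qed.

Lemma r_gt0 : (0 < r)%N. Proof. lia. Qed.
Lemma ltar : (r - 2 < r)%N. Proof. lia. Qed.
Lemma ltbr : (r - 1 < r)%N. Proof. lia. Qed.
Definition i0 : 'I_r := Ordinal r_gt0.
Definition ia : 'I_r := Ordinal ltar.
Definition ib : 'I_r := Ordinal ltbr.

Lemma ord_cases (j : 'I_r) :
  [\/ ((j : nat) < r - 2)%N, j = ia | j = ib].
Proof.
case: (ltnP j (r - 2)) => h; first by constructor 1.
have := ltn_ord j => h2.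
case: (eqVneq (j : nat) (r - 2)%N) => h3.
  by constructor 2; apply: val_inj.
by constructor 3; apply: val_inj => /=; lia.
Qed.

Lemma cG0 : cG i0 = 1.
Proof. by rewrite /cG /= ifT //; lia. Qed.
Lemma cGa : cG ia = alpha%:R.
Proof. by rewrite /cG /= ifF ?eqxx //; lia. Qed.
Lemma cGb : cG ib = beta%:R.
Proof. rewrite /cG /= ifF ?ifF //; lia. Qed.

Definition gg := gcdn (gcdn alpha beta) l.
Lemma gg_gt0 : (0 < gg)%N.
Proof. rewrite /gg gcdn_gt0; apply/orP; right; lia. Qed.
Lemma ggR0 : (gg%:R : R) != 0.
Proof. by rewrite pnatr_eq0 -lt0n gg_gt0. Qed.
Lemma lR0 : (l%:R : R) != 0.
Proof. rewrite pnatr_eq0; lia. Qed.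

Lemma sum_min (s : R) : 0 < s -> inNG l alpha beta (s *: sumE R r) ->
  (gg%:R)^-1 <= s.
Proof.
move=> s0 /NG_coord [z [k E]].
have E0 := E i0; have Ea := E ia; have Eb := E ib.
have h02 : (0 < r - 2)%N by lia.
have hb2 : (r - 1 < r - 2)%N = false by lia.
rewrite mxE sumE_E cG0 /= h02 mulr1n mulr1 in E0.
rewrite mxE sumE_E cGa /= ltnn mulr0 in Ea.
rewrite mxE sumE_E cGb /= hb2 mulr0 in Eb.
have [u1 [v1 H1]] := Bezoutz (alpha%:Z) (beta%:Z).
have [u [v H2]] := Bezoutz (gcdz alpha%:Z beta%:Z) (l%:Z).
have Hg : (gg%:Z) = u * (u1 * alpha%:Z + v1 * beta%:Z) + v * l%:Z.
  by rewrite H1 H2.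
have HG : (gg%:R : R) = u%:~R * (u1%:~R * alpha%:R + v1%:~R * beta%:R) + v%:~R * l%:R.
  have -> : (gg%:R : R) = (gg%:Z)%:~R by [].
  by rewrite Hg !(intrD, intrM).
pose m : int := u * (u1 * (- z ia) + v1 * (- z ib)) + v * k.
have key : (gg%:R : R) * s = (gg%:Z * z i0 + m)%:~R.
  have li : (l%:R : R) * (l%:R)^-1 = 1 by rewrite divff // lR0.
  apply/eqP; rewrite -subr_eq0; apply/eqP.
  rewrite /m !(intrD, intrM, intrN).
  have -> : ((gg%:Z)%:~R : R) = gg%:R by [].
  rewrite HG.
  transitivity ((u%:~R * (u1%:~R * alpha%:R + v1%:~R * beta%:R) + v%:~R * l%:R) * (s - ((z i0)%:~R + k%:~R * ((l%:R)^-1 * 1)))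
     + u%:~R * u1%:~R * ((z ia)%:~R + k%:~R * ((l%:R)^-1 * alpha%:R))
     + u%:~R * v1%:~R * ((z ib)%:~R + k%:~R * ((l%:R)^-1 * beta%:R))
     + v%:~R * k%:~R * (l%:R * (l%:R)^-1 - 1) : R).
    ring.
  by rewrite -E0 -Ea -Eb li !subrr !mulr0 !addr0.
have npos : 0 < gg%:Z * z i0 + m.
  rewrite -(ltr0z R) -key mulr_gt0 // ltr0n; exact: gg_gt0.
rewrite gtz0_ge1 -(ler_int R) -key /= in npos.
have -> : s = (gg%:R)^-1 * (gg%:R * s) by rewrite mulKf // ggR0.
by rewrite -[X in X <= _]mulr1 ler_wpM2l // invr_ge0 ler0n.
Qed.


Lemma unit_min (j : 'I_r) (s : R) : (r - 2 <= j)%N -> 0 < s ->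
  inNG l alpha beta (s *: unitv R r j) -> 1 <= s.
Proof.
move=> hj s0 /NG_coord [z [k E]].
have [c hc] : exists c : nat, cG j = c%:R.
  rewrite /cG ifF; last by lia.
  by case: ifP => _; [exists alpha | exists beta].
have E0 := E i0; have Ej := E j.
have h0j : ((i0 : nat) == j) = false by rewrite /=; lia.
rewrite mxE unitvE h0j mulr0 cG0 in E0.
rewrite mxE unitvE eqxx mulr1 hc in Ej.
have key : s = (z j - z i0 * c%:Z)%:~R.
  rewrite !(intrD, intrM, intrN).
  have -> : ((c%:Z)%:~R : R) = c%:R by [].
  apply/eqP; rewrite -subr_eq0; apply/eqP.
  transitivity ((s - ((z j)%:~R + k%:~R * ((l%:R)^-1 * c%:R)))
     + c%:R * ((z i0)%:~R + k%:~R * ((l%:R)^-1 * 1)) : R); first by ring.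
  by rewrite -E0 -Ej subrr mulr0 addr0.
have npos : 0 < z j - z i0 * c%:Z by rewrite -(ltr0z R) -key.
by rewrite gtz0_ge1 -(ler_int R) -key in npos.
Qed.

Lemma NG_unit (j : 'I_r) : (r - 2 <= j)%N -> inNGbar l alpha beta (unitv R r j).
Proof.
move=> hj; split.
  exists (fun i : 'I_r => ((i : nat) == j : nat)%:Z), 0.
  apply/rowP => i; by rewrite !mxE mul0r addr0.
move=> i i' hi hi'; rewrite !unitvE.
have -> : ((i : nat) == j) = false by lia.
have -> : ((i' : nat) == j) = false by lia.
by [].
Qed.

Lemma NG_nG : inNGbar l alpha beta ((gg%:R)^-1 *: sumE R r).
Proof.
have gl : (gg %| l)%N by apply: dvdn_gcdr.
have ga : (gg %| alpha)%N by apply: dvdn_trans (dvdn_gcdl _ _) (dvdn_gcdl _ _).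
have gb : (gg %| beta)%N by apply: dvdn_trans (dvdn_gcdl _ _) (dvdn_gcdr _ _).
have Hl : (l%:R : R) = (l %/ gg)%:R * gg%:R by rewrite -natrM divnK.
have Ha : (alpha%:R : R) = (alpha %/ gg)%:R * gg%:R by rewrite -natrM divnK.
have Hb : (beta%:R : R) = (beta %/ gg)%:R * gg%:R by rewrite -natrM divnK.
have ql : ((l %/ gg)%:R : R) != 0.
  move: lR0; rewrite Hl mulf_eq0 negb_or => /andP [] //.
split.
  exists (fun i : 'I_r => if ((i : nat) < r - 2)%N then 0
     else if (i : nat) == (r - 2)%N then - (alpha %/ gg)%:Z else - (beta %/ gg)%:Z).
  exists (l %/ gg)%:Z.
  apply/rowP => i; rewrite /vG !mxE sumE_E.
  have -> : (((l %/ gg)%:Z)%:~R : R) = (l %/ gg)%:R by [].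
  case: ifP => _.
    rewrite Hl /=; field; by rewrite ql ggR0.
  case: ifP => _.
    rewrite Hl Ha intrN /=; field; by rewrite ql ggR0.
  rewrite Hl Hb intrN /=; field; by rewrite ql ggR0.
move=> i i' hi hi'; by rewrite !mxE !sumE_E hi hi'.
Qed.

Lemma flp_of (S : 'rV[R]_r -> Prop) w s0 a : 0 < s0 -> S (s0 *: w) ->
  (forall s, 0 < s -> S (s *: w) -> s0 <= s) -> 0 < a ->
  first_lattice_point S (a *: w) (s0 *: w).
Proof.
move=> s00 Ss0 hmin a0; exists (s0 / a); split; first by rewrite divr_gt0.
split; first by rewrite scalerA divfK // gt_eqF.
split => // s sp Ss.
rewrite ler_pdivrMr //; apply: hmin; first by rewrite mulr_gt0.
by rewrite -scalerA.
Qed.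

Lemma flp_eq (S : 'rV[R]_r -> Prop) w s0 a p : 0 < s0 -> S (s0 *: w) ->
  (forall s, 0 < s -> S (s *: w) -> s0 <= s) -> 0 < a ->
  first_lattice_point S (a *: w) p -> p = s0 *: w.
Proof.
move=> s00 Ss0 hmin a0 [t [t0 [-> [Sp hm]]]].
rewrite scalerA in Sp *.
have h1 := hmin (t * a) (mulr_gt0 t0 a0) Sp.
have h2 : t <= s0 / a.
  by apply: hm; [rewrite divr_gt0 | rewrite scalerA divfK // gt_eqF].
rewrite ler_pdivlMr // in h2.
by congr (_ *: _); apply/le_anti; rewrite h2 h1.
Qed.

Lemma sE0 : sumE R r 0 i0 = 1.
Proof. rewrite sumE_E /=; have -> : (0 < r - 2)%N by lia. by []. Qed.
Lemma sEa : sumE R r 0 ia = 0.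
Proof. by rewrite sumE_E /= ltnn. Qed.
Lemma sEb : sumE R r 0 ib = 0.
Proof. rewrite sumE_E /=; have -> : (r - 1 < r - 2)%N = false by lia. by []. Qed.
Lemma ua0 : unitv R r (r - 2) 0 i0 = 0.
Proof. rewrite unitvE /=; have -> : (0 == r - 2)%N = false by lia. by []. Qed.
Lemma uaa : unitv R r (r - 2) 0 ia = 1.
Proof. by rewrite unitvE /= eqxx. Qed.
Lemma uab : unitv R r (r - 2) 0 ib = 0.
Proof. rewrite unitvE /=; have -> : (r - 1 == r - 2)%N = false by lia. by []. Qed.
Lemma ub0 : unitv R r (r - 1) 0 i0 = 0.
Proof. rewrite unitvE /=; have -> : (0 == r - 1)%N = false by lia. by []. Qed.
Lemma uba : unitv R r (r - 1) 0 ia = 0.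
Proof. rewrite unitvE /=; have -> : (r - 2 == r - 1)%N = false by lia. by []. Qed.
Lemma ubb : unitv R r (r - 1) 0 ib = 1.
Proof. by rewrite unitvE /= eqxx. Qed.

Lemma decomp (x : 'rV[R]_r) : inL x ->
  x = x 0 i0 *: sumE R r + x 0 ia *: unitv R r (r - 2) + x 0 ib *: unitv R r (r - 1).
Proof.
move=> xL; apply/rowP => j; rewrite !mxE.
have e1 : (r - 2 == r - 1)%N = false by lia.
have e2 : (r - 1 == r - 2)%N = false by lia.
case: (ord_cases j) => [hj|->|->].
- rewrite sumE_E hj.
  have -> : ((j : nat) == r - 2)%N = false by lia.
  have -> : ((j : nat) == r - 1)%N = false by lia.
  rewrite mulr1 !mulr0 !addr0; apply: xL => //=; lia.
- by rewrite sEa /= eqxx e1 mulr0 mulr1 mulr0 add0r addr0.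
- by rewrite sEb /= eqxx e2 !mulr0 mulr1 !add0r.
Qed.

Lemma C_comb a b c : 0 <= a -> 0 <= b -> 0 <= c ->
  inSigma0bar (a *: sumE R r + b *: unitv R r (r - 2) + c *: unitv R r (r - 1)).
Proof.
move=> a0 b0 c0; split.
  move=> i; rewrite !mxE sumE_E.
  by rewrite !addr_ge0 // mulr_ge0 // ler0n.
move=> i i' hi hi'; rewrite !mxE !sumE_E hi hi'.
have -> : ((i : nat) == r - 2)%N = false by lia.
have -> : ((i : nat) == r - 1)%N = false by lia.
have -> : ((i' : nat) == r - 2)%N = false by lia.
have -> : ((i' : nat) == r - 1)%N = false by lia.
by [].
Qed.

Lemma extr_cases u : extremal_ray_gen (@inSigma0bar R r) u ->
  [\/ exists2 a, 0 < a & u = a *: sumE R r,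
      exists2 a, 0 < a & u = a *: unitv R r (r - 2) |
      exists2 a, 0 < a & u = a *: unitv R r (r - 1)].
Proof.
move=> [u0 [[Cpos CL] ext]].
have D := decomp CL.
have a0 := Cpos i0; have b0 := Cpos ia; have c0 := Cpos ib.
rewrite D in u0 ext *; move: a0 b0 c0 u0 ext; clear D Cpos CL.
move: (u 0 i0) (u 0 ia) (u 0 ib) => a b c a0 b0 c0 u0 ext.
have one : forall s x : R, 0 < x -> x = s * x -> s = 1.
  move=> s x x0 h; apply: (mulIf (lt0r_neq0 x0)) => /=; by rewrite mul1r -h.
have Cc := @C_comb.
case: (eqVneq a 0) => [ae|an0]; last first.
  have {}a0 : 0 < a by rewrite lt0r an0 a0.
  constructor 1; exists a => //.
  have [s [_ hs]] := ext (a *: sumE R r) (b *: unitv R r (r - 2) + c *: unitv R r (r - 1))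
     ltac:(have := Cc a 0 0 (ltW a0) (lexx 0) (lexx 0); by rewrite !scale0r !addr0)
     ltac:(have := Cc 0 b c (lexx 0) b0 c0; by rewrite !scale0r !add0r)
     ltac:(by rewrite addrA).
  have := congr1 (fun M : 'rV[R]_r => M 0 i0) hs; rewrite !mxE sE0 /=.
  have -> : (0 == r - 2)%N = false by lia.
  have -> : (0 == r - 1)%N = false by lia.
  rewrite !mulr0 !mulr1 !addr0 => /(one _ _ a0) s1.
  by rewrite s1 scale1r in hs; rewrite -hs.
subst a; case: (eqVneq b 0) => [be|bn0]; last first.
  have {}b0 : 0 < b by rewrite lt0r bn0 b0.
  constructor 2; exists b => //.
  have [s [_ hs]] := ext (b *: unitv R r (r - 2)) (c *: unitv R r (r - 1))
     ltac:(have := Cc 0 b 0 (lexx 0) (ltW b0) (lexx 0); by rewrite !scale0r addr0 add0r)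
     ltac:(have := Cc 0 0 c (lexx 0) (lexx 0) c0; by rewrite !scale0r !add0r)
     ltac:(by rewrite scale0r add0r).
  have := congr1 (fun M : 'rV[R]_r => M 0 ia) hs; rewrite !mxE sEa /= eqxx.
  have -> : (r - 2 == r - 1)%N = false by lia.
  rewrite !mulr0 !mulr1 add0r addr0 => /(one _ _ b0) s1.
  by rewrite s1 scale1r in hs; rewrite -hs.
subst b; case: (eqVneq c 0) => [ce|cn0]; last first.
  have {}c0 : 0 < c by rewrite lt0r cn0 c0.
  by constructor 3; exists c => //; rewrite !scale0r !add0r.
by move: u0; rewrite ce !scale0r !addr0 eqxx.
Qed.

Lemma nonneg_sum0 (x y : R) : 0 <= x -> 0 <= y -> x + y = 0 -> x = 0.
Proof. by move=> x0 y0 /eqP; rewrite paddr_eq0 // => /andP [/eqP]. Qed.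

Lemma sumE_neq0 : sumE R r != 0.
Proof.
apply/eqP => h; have := congr1 (fun M : 'rV[R]_r => M 0 i0) h.
by rewrite sE0 mxE; apply/eqP; rewrite oner_neq0.
Qed.

Lemma ext_sumE : extremal_ray_gen (@inSigma0bar R r) (sumE R r).
Proof.
split; first exact: sumE_neq0.
split.
  split; first by move=> i; rewrite sumE_E ler0n.
  by move=> i i' hi hi'; rewrite !sumE_E hi hi'.
move=> A B [AP AL] [BP BL] hAB; exists (A 0 i0); split; first exact: AP.
apply/rowP => j; rewrite mxE sumE_E.
have h02 : (0 < r - 2)%N by lia.
case: (ord_cases j) => [hj|->|->].
- by rewrite hj mulr1; apply: AL.
- rewrite /= ltnn mulr0; apply: (nonneg_sum0 (AP ia) (BP ia)).
  by have := congr1 (fun M : 'rV[R]_r => M 0 ia) hAB; rewrite mxE sEa.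
- have -> : (r - 1 < r - 2)%N = false by lia.
  rewrite mulr0; apply: (nonneg_sum0 (AP ib) (BP ib)).
  by have := congr1 (fun M : 'rV[R]_r => M 0 ib) hAB; rewrite mxE sEb.
Qed.

Lemma ext_unit (j : 'I_r) : (r - 2 <= j)%N ->
  extremal_ray_gen (@inSigma0bar R r) (unitv R r j).
Proof.
move=> hj.
split.
  apply/eqP => h; have := congr1 (fun M : 'rV[R]_r => M 0 j) h.
  by rewrite unitvE mxE eqxx; apply/eqP; rewrite oner_neq0.
split.
  split; first by move=> i; rewrite unitvE ler0n.
  move=> i i' hi hi'; rewrite !unitvE.
  have -> : ((i : nat) == j) = false by lia.
  have -> : ((i' : nat) == j) = false by lia.
  by [].
move=> A B [AP AL] [BP BL] hAB; exists (A 0 j); split; first exact: AP.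
apply/rowP => k; rewrite mxE unitvE.
case: (eqVneq k j) => [->|ne]; first by rewrite eqxx mulr1.
have -> : ((k : nat) == j) = false by apply/negbTE.
rewrite mulr0; apply: (nonneg_sum0 (AP k) (BP k)).
have := congr1 (fun M : 'rV[R]_r => M 0 k) hAB; rewrite mxE unitvE => ->.
by have -> : ((k : nat) == j) = false by apply/negbTE.
Qed.

End Aux.

Unset Implicit Arguments.
Set Strict Implicit.

Theorem lemma6p11 (R : realType) (r l alpha beta : nat)
  (hr : (4 <= r)%N) (hl : (r <= l)%N) (hab : (alpha + beta = l - (r - 2))%N) :
  let g := gcdn (gcdn alpha beta) l in
  let NGbar := @inNGbar R r l alpha beta in
  let d : 'rV[R]_r := ((r - 2)%:R)^-1 *: sumE R r in
  let nG : 'rV[R]_r := (g%:R)^-1 *: sumE R r in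
  [/\ first_lattice_point NGbar d nG,
      (forall p : 'rV[R]_r, prim_min_gen (@inSigma0bar R r) NGbar p <->
         [\/ p = nG, p = unitv R r (r - 2)%N | p = unitv R r (r - 1)%N]) &
      ((0 < ((r - 2)%N%:R / g%:R : rat)) /\
       NGbar (ratr (((r - 2)%N%:R / g%:R : rat)) *: d) /\
       ratr (((r - 2)%N%:R / g%:R : rat)) *: d != 0 /\
       (forall kappa : rat, 0 < kappa ->
          NGbar (ratr kappa *: d) -> ratr kappa *: d != 0 ->
          ((r - 2)%N%:R / g%:R : rat) <= kappa))].
Proof.
move=> g NGbar d nG.
have g0 : (0 < g)%N := gg_gt0 hr hl hab.
have gi0 : 0 < (g%:R : R)^-1 by rewrite invr_gt0 ltr0n.
have Sn : NGbar ((g%:R)^-1 *: sumE R r) := NG_nG R hr hl hab.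
have Smin : forall s : R, 0 < s -> NGbar (s *: sumE R r) -> (g%:R)^-1 <= s.
  by move=> s s0 [h _]; apply: (sum_min hr hl hab s0 h).
have U : forall j : 'I_r, (r - 2 <= j)%N ->
   [/\ NGbar (1 *: unitv R r j),
       (forall s : R, 0 < s -> NGbar (s *: unitv R r j) -> 1 <= s) &
       first_lattice_point NGbar (unitv R r j) (unitv R r j)].
  move=> j hj.
  have N1 : NGbar (1 *: unitv R r j) by rewrite scale1r; apply: NG_unit.
  have M1 : forall s : R, 0 < s -> NGbar (s *: unitv R r j) -> 1 <= s.
    by move=> s s0 [h _]; apply: (unit_min hr hl hab hj s0 h).
  split => //.
  by have := flp_of ltr01 N1 M1 ltr01; rewrite !scale1r.
have r20 : (0 < r - 2)%N by lia.
have r2R : 0 < ((r - 2)%:R : R)^-1 by rewrite invr_gt0 ltr0n.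
split.
- exact: (flp_of gi0 Sn Smin r2R).
- move=> p; split.
    move=> [u [Eu Fu]].
    case: (extr_cases hr hl hab Eu) => [[a a0 Ea]|[a a0 Ea]|[a a0 Ea]]; rewrite Ea in Fu.
    + by constructor 1; apply: (flp_eq gi0 Sn Smin a0 Fu).
    + have [N1 M1 _] := U (ia hr hl hab) (leqnn _).
      by constructor 2; rewrite (flp_eq ltr01 N1 M1 a0 Fu) scale1r.
    + have hb : (r - 2 <= ib hr hl hab)%N by rewrite /=; lia.
      have [N1 M1 _] := U (ib hr hl hab) hb.
      by constructor 3; rewrite (flp_eq ltr01 N1 M1 a0 Fu) scale1r.
  case=> ->.
  + exists (sumE R r); split; first exact: (@ext_sumE R r l alpha beta hr hl hab).
    by have := flp_of gi0 Sn Smin ltr01; rewrite scale1r.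
  + exists (unitv R r (ia hr hl hab)); split.
      exact: (@ext_unit R r l alpha beta hr hl hab (ia hr hl hab) (leqnn _)).
    by have [_ _ F] := U (ia hr hl hab) (leqnn _).
  + have hb : (r - 2 <= ib hr hl hab)%N by rewrite /=; lia.
    exists (unitv R r (ib hr hl hab)); split.
      exact: (@ext_unit R r l alpha beta hr hl hab (ib hr hl hab) hb).
    by have [_ _ F] := U (ib hr hl hab) hb.
- have rq : ratr ((r - 2)%N%:R / g%:R : rat) = ((r - 2)%:R / g%:R : R).
    by rewrite fmorph_div !rmorph_nat.
  have sc : forall x : R, x *: d = (x * ((r - 2)%:R)^-1) *: sumE R r.
    by move=> x; rewrite /d scalerA.
  have r2n0 : ((r - 2)%:R : R) != 0 by rewrite pnatr_eq0 -lt0n.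
  have gn0 : (g%:R : R) != 0 by rewrite pnatr_eq0 -lt0n.
  have e1 : ((r - 2)%:R / g%:R : R) * ((r - 2)%:R)^-1 = (g%:R)^-1.
    by field; rewrite r2n0 gn0.
  split; first by rewrite divr_gt0 // ltr0n.
  split; first by rewrite rq sc e1.
  split.
    rewrite rq sc e1 scaler_eq0 negb_or invr_eq0 gn0 /=.
    exact: (@sumE_neq0 R r l alpha beta hr hl hab).
  move=> kappa k0 Nk _.
  rewrite sc in Nk.
  have := Smin _ _ Nk.
  rewrite -(ler_rat R) rq.
  have kp : 0 < ratr kappa :> R by rewrite ltr0q.
  move=> h; have := h ltac:(by rewrite divr_gt0 // ltr0n).
  by rewrite ler_pdivlMr ?ltr0n // mulrC.
Qed.
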